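(* Let $\alpha\in(0,1]$ and let $n$ be such that $n^\alpha=2^q$ for a positive integer $q$. Let $R\subset \mathrm{conv}(A_n)$ be an open axis-aligned rectangle of width $w(R)>1$, height $h(R)>1$ and area $w(R)h(R)\ge 4n^\alpha$. Then $B_n\cap R\neq\emptyset$.
   Context: Let $A_n=\{(i,j)\in\mathbb{Z}^2: 0\le i,j\le 14n\}$, so $\mathrm{conv}(A_n)=[0,14n]^2$. The sparse grid $B_n\subseteq A_n$ is the set of points of $A_n$ of at least one of the following forms: (1) $(i,j)$ with $n^\alpha \mid ij$; (2) $(i+k,j+k)$ with $n^\alpha\mid i$, $n^\alpha\mid j$, $k\in\{1,\dots,n^\alpha\}$ (forward diagonals); (3) $(i+k,j-k)$ with $n^\alpha\mid i$, $n^\alpha\mid j$, $k\in\{1,\dots,n^\alpha\}$ (backward diagonals). For an open rectangle $R=(x_1,x_2)\times(y_1,y_2)$, $w(R)=x_2-x_1$ and $h(R)=y_2-y_1$. *)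

(* Defs.v *)
From Stdlib Require Import Reals ZArith.
Open Scope R_scope.

Definition in_A (n : nat) (i j : Z) : Prop :=
  (0 <= i <= 14 * Z.of_nat n)%Z /\ (0 <= j <= 14 * Z.of_nat n)%Z.

(* Sparse grid B_n, with the integer m playing the role of n^alpha. *)
Definition in_B (m : Z) (n : nat) (i j : Z) : Prop :=
  in_A n i j /\
  ( (m | i * j)%Z
    \/ (exists i0 j0 k : Z, (m | i0)%Z /\ (m | j0)%Z /\ (1 <= k <= m)%Z /\
                            i = (i0 + k)%Z /\ j = (j0 + k)%Z)
    \/ (exists i0 j0 k : Z, (m | i0)%Z /\ (m | j0)%Z /\ (1 <= k <= m)%Z /\
                            i = (i0 + k)%Z /\ j = (j0 - k)%Z) ).

(* Main.v *)
Require Import Defs.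
From Stdlib Require Import Reals ZArith Lra Lia Psatz.
Open Scope R_scope.

Lemma exists_mult (x1 x2 : R) (a : nat) :
  2 ^ a < x2 - x1 -> exists z : Z, x1 < IZR (2 ^ Z.of_nat a * z)%Z < x2.
Proof.
  intro H.
  assert (Hd : 0 < 2 ^ a) by (apply pow_lt; lra).
  exists (up (x1 / 2 ^ a)).
  destruct (archimed (x1 / 2 ^ a)) as [H1 H2].
  rewrite mult_IZR, <- pow_IZR.
  set (d := 2 ^ a) in *. set (t := x1 / d) in *.
  assert (Ht : x1 = d * t) by (unfold t; field; lra).
  set (Z0 := IZR (up t)) in *.
  split; nra.
Qed.

Lemma two_pow_ge (k : nat) : INR k <= 2 ^ k.
Proof.
  induction k. simpl; lra.
  rewrite S_INR. simpl. assert (1 <= 2 ^ k) by (apply pow_R1_Rle; lra). lra.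
Qed.

Lemma pow_bracket (L : R) : 1 < L -> exists a : nat, 2 ^ a < L <= 2 ^ S a.
Proof.
  intro HL.
  assert (HN : forall N : nat, L <= 2 ^ N -> exists a : nat, 2 ^ a < L <= 2 ^ S a).
  { induction N as [|N IH]; intro H.
    - simpl in H; lra.
    - destruct (Rle_lt_dec L (2 ^ N)) as [h|h].
      + now apply IH.
      + exists N; split; assumption. }
  apply (HN (Z.to_nat (up L))).
  destruct (archimed L) as [H1 _].
  eapply Rle_trans; [|apply two_pow_ge].
  rewrite INR_IZR_INZ, Z2Nat.id. lra.
  apply le_IZR. lra.
Qed.

Theorem lemma4 (alpha : R) (n q : nat) (x1 x2 y1 y2 : R) :
  0 < alpha <= 1 ->
  (0 < q)%nat ->
  Rpower (INR n) alpha = 2 ^ q ->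
  (* R = (x1,x2) x (y1,y2) is contained in conv(A_n) = [0,14n]^2 *)
  0 <= x1 -> x2 <= 14 * INR n -> 0 <= y1 -> y2 <= 14 * INR n ->
  x2 - x1 > 1 -> y2 - y1 > 1 ->
  (x2 - x1) * (y2 - y1) >= 4 * Rpower (INR n) alpha ->
  exists i j : Z, in_B (2 ^ Z.of_nat q)%Z n i j /\
    x1 < IZR i < x2 /\ y1 < IZR j < y2.
Proof.
  intros _ _ Hm Hx1 Hx2 Hy1 Hy2 Hw Hh Harea.
  rewrite Hm in Harea.
  destruct (pow_bracket (x2 - x1)) as [a [Ha1 Ha2]]; [lra|].
  destruct (pow_bracket (y2 - y1)) as [b [Hb1 Hb2]]; [lra|].
  destruct (exists_mult x1 x2 a Ha1) as [z [Hz1 Hz2]].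
  destruct (exists_mult y1 y2 b Hb1) as [z' [Hz1' Hz2']].
  assert (Hab : (q <= a + b)%nat).
  { destruct (Nat.le_gt_cases q (a + b)) as [h|h]; [exact h|].
    exfalso.
    assert (Hlt : 2 ^ (a + b) < 2 ^ q) by (apply Rlt_pow; [lra|exact h]).
    rewrite pow_add in Hlt. simpl in Ha2, Hb2.
    assert (0 < 2 ^ a) by (apply pow_lt; lra).
    assert (0 < 2 ^ b) by (apply pow_lt; lra).
    assert ((x2 - x1) * (y2 - y1) <= (2 * 2 ^ a) * (2 * 2 ^ b)).
    { apply Rmult_le_compat; lra. }
    nra. }
  exists (2 ^ Z.of_nat a * z)%Z, (2 ^ Z.of_nat b * z')%Z.
  split; [|split; split; assumption].
  split.
  - unfold in_A. split; split; apply le_IZR;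
      rewrite ?(mult_IZR 14), <- ?INR_IZR_INZ; lra.
  - left.
    exists (z * z' * 2 ^ Z.of_nat (a + b - q))%Z.
    replace (2 ^ Z.of_nat a * z * (2 ^ Z.of_nat b * z'))%Z
      with (z * z' * (2 ^ Z.of_nat a * 2 ^ Z.of_nat b))%Z by ring.
    rewrite <- Z.pow_add_r by lia.
    replace (Z.of_nat a + Z.of_nat b)%Z
      with (Z.of_nat (a + b - q) + Z.of_nat q)%Z by lia.
    rewrite Z.pow_add_r by lia. ring.
Qed.
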